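(* Let $f:\mathbb{R}^p\to\mathbb{R}\cup\{+\infty\}$ be $\mu_f$-strongly convex and $L_f$-smooth, and $g:\mathbb{R}^p\to\mathbb{R}\cup\{+\infty\}$ proper, closed, convex. Fix $x^0\in\operatorname{dom} f\cap\operatorname{dom} g$, $\xi^0\in\partial g(x^0)$, and for $\tau\in(0,1]$ let $x^\ast_\tau$ be the minimizer of $\tau f(x)-(1-\tau)\langle\xi^0,x\rangle+g(x)$. Let $0<m\le L<+\infty$ satisfy $\omega:=\frac1m\sqrt{(L-2\mu_f)m+L_f^2}<1$. Let $\{\tau_k\}\subset(0,1]$ and let $\{x^k\}$ be generated by $x^{k+1}:=\operatorname{prox}^{H_k}_{\frac{1}{\tau_{k+1}}g}\big(x^k-H_k^{-1}(\nabla f(x^k)-(\tfrac{1}{\tau_{k+1}}-1)\xi^0)\big)$ with $H_k\in\mathbb{S}^p_{++}$, $m\mathbb{I}\preceq H_k\preceq L\mathbb{I}$. Then $$\|x^{k+1}-x^\ast_{\tau_{k+1}}\|_2\le\omega\|x^k-x^\ast_{\tau_{k+1}}\|_2.$$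
   Context: $L_f$-smooth: $\|\nabla f(x)-\nabla f(y)\|_2\le L_f\|x-y\|_2$. For $H\in\mathbb{S}^p_{++}$ (symmetric positive definite), $\|u\|_H:=\langle Hu,u\rangle^{1/2}$ and $\operatorname{prox}^H_h(x):=\arg\min_u\{h(u)+\tfrac12\|u-x\|_H^2\}$. *)

(* Defs.v *)
From HB Require Import structures.
From mathcomp Require Import all_boot all_order all_algebra.
From mathcomp Require Import all_classical all_reals all_analysis.
Set Implicit Arguments. Unset Strict Implicit. Unset Printing Implicit Defensive.
Import Order.TTheory GRing.Theory Num.Theory.
Import numFieldNormedType.Exports.
Local Open Scope classical_set_scope.
Local Open Scope ring_scope.

Section Defs.
Variables (R : realType) (p : nat).
Notation V := 'cV[R]_p.

Definition inner (u v : V) : R := (u^T *m v) 0 0.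
Definition norm2 (u : V) : R := Num.sqrt (inner u u).
Definition normH (H : 'M[R]_p) (u : V) : R := Num.sqrt (inner (H *m u) u).

Definition sym_posdef (H : 'M[R]_p) : Prop :=
  H^T = H /\ forall u : V, u != 0 -> 0 < inner (H *m u) u.

Definition loewner_bounds (m L : R) (H : 'M[R]_p) : Prop :=
  forall u : V, m * inner u u <= inner (H *m u) u /\ inner (H *m u) u <= L * inner u u.

Definition is_gradient (f : V -> R) (gradf : V -> V) : Prop :=
  forall x : V, differentiable f x /\ ('d f x : V -> R) = (fun h => inner (gradf x) h).

Definition strongly_convex (mu : R) (f : V -> R) : Prop :=
  forall (x y : V) (t : R), 0 <= t <= 1 ->
    f (t *: x + (1 - t) *: y) <=
      t * f x + (1 - t) * f y - mu / 2 * t * (1 - t) * norm2 (x - y) ^+ 2.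

Definition lipschitz_gradient (Lf : R) (gradf : V -> V) : Prop :=
  forall x y : V, norm2 (gradf x - gradf y) <= Lf * norm2 (x - y).

Definition proper_fun (g : V -> \bar R) : Prop :=
  (forall x, g x != -oo%E) /\ (exists x, (g x < +oo)%E).

(* closed = lower semicontinuous = all sublevel sets closed *)
Definition closed_fun (g : V -> \bar R) : Prop :=
  forall a : R, closed [set x | (g x <= a%:E)%E].

Definition convex_efun (g : V -> \bar R) : Prop :=
  forall (x y : V) (t : R), 0 <= t <= 1 ->
    (g (t *: x + (1 - t) *: y)%R <= t%:E * g x + (1 - t)%:E * g y)%E.

Definition subgradient (g : V -> \bar R) (x xi : V) : Prop :=
  forall y : V, (g x + (inner xi (y - x)%R)%:E <= g y)%E.

Definition is_minimizer (F : V -> \bar R) (x : V) : Prop :=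
  forall y : V, (F x <= F y)%E.

Definition is_prox (H : 'M[R]_p) (h : V -> \bar R) (z u : V) : Prop :=
  is_minimizer (fun v => (h v + (2^-1 * normH H (v - z) ^+ 2)%:E)%E) u.

End Defs.

(* Main.v *)
Require Import Defs.
From HB Require Import structures.
From mathcomp Require Import all_boot all_order all_algebra.
From mathcomp Require Import all_classical all_reals all_analysis.
From mathcomp Require Import ring lra.
Import Order.TTheory GRing.Theory Num.Theory.
Import numFieldNormedType.Exports.
Local Open Scope classical_set_scope.
Local Open Scope ring_scope.

Section Helpers.
Variables (R : realType) (p : nat).
Notation V := 'cV[R]_p.

Lemma innerDl (u v w : V) : inner (u + v) w = inner u w + inner v w.
Proof. by rewrite /inner raddfD /= mulmxDl mxE. Qed.
Lemma innerZl (a : R) (u w : V) : inner (a *: u) w = a * inner u w.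
Proof. by rewrite /inner linearZ /= -scalemxAl mxE. Qed.
Lemma innerNl (u w : V) : inner (- u) w = - inner u w.
Proof. by rewrite -scaleN1r innerZl mulN1r. Qed.
Lemma innerBl (u v w : V) : inner (u - v) w = inner u w - inner v w.
Proof. by rewrite innerDl innerNl. Qed.
Lemma innerC (u v : V) : inner u v = inner v u.
Proof. by rewrite /inner -{1}(trmxK v) -trmx_mul mxE. Qed.
Lemma innerDr (u v w : V) : inner w (u + v) = inner w u + inner w v.
Proof. by rewrite !(innerC w) innerDl. Qed.
Lemma innerZr (a : R) (u w : V) : inner w (a *: u) = a * inner w u.
Proof. by rewrite !(innerC w) innerZl. Qed.
Lemma innerNr (u w : V) : inner w (- u) = - inner w u.
Proof. by rewrite !(innerC w) innerNl. Qed.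
Lemma innerBr (u v w : V) : inner w (u - v) = inner w u - inner w v.
Proof. by rewrite innerDr innerNr. Qed.
Lemma inner0l (w : V) : inner 0 w = 0.
Proof. by rewrite /inner trmx0 mul0mx mxE. Qed.
Lemma inner_sym (H : 'M[R]_p) (u v : V) : H^T = H -> inner (H *m u) v = inner u (H *m v).
Proof. by move=> HT; rewrite /inner trmx_mul HT mulmxA. Qed.
Lemma inner_ge0 (u : V) : 0 <= inner u u.
Proof. by rewrite /inner mxE; apply: sumr_ge0 => i _; rewrite mxE -expr2 sqr_ge0. Qed.
Lemma norm2_sq (u : V) : norm2 u ^+ 2 = inner u u.
Proof. by rewrite /norm2 sqr_sqrtr // inner_ge0. Qed.

Lemma lim_le (F : R -> R) (l a b : R) : F @ 0^' --> l ->
  (forall s, 0 < s < 1 -> F s <= a + s * b) -> l <= a.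
Proof.
move=> Fl Hs; rewrite leNgt; apply/negP => al.
set e := (l - a) / 2.
have e0 : 0 < e by rewrite divr_gt0 // subr_gt0.
move/cvgrPdist_lt: Fl => /(_ e e0) H1.
have H2 : \forall t \near 0^'+, `|l - F t| < e.
  move: H1; rewrite /dnbhs !near_withinE; apply: filterS => t P tp.
  by apply: P; rewrite gt_eqF.
set d := Num.min 1 (e / (`|b| + 1)).
have d0 : 0 < d by rewrite lt_min ltr01 divr_gt0 // ltr_wpDl.
have Hsall := filter_ex (filterI H2 (filterI (nbhs_right_gt 0) (nbhs_right_lt d0))).
have PF := at_right_proper_filter (0:R). case: (Hsall PF PF PF) => s [Hs1 [Hs2 Hs3]].
have sd1 : s < 1 by apply: (lt_le_trans Hs3); rewrite ge_min lexx.
have := Hs s; rewrite Hs2 sd1 => /(_ isT) Fs.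
have : s < e / (`|b| + 1) by apply: (lt_le_trans Hs3); rewrite ge_min lexx orbT.
rewrite ltr_pdivlMr ?ltr_wpDl // => se.
have sb : s * b <= s * `|b| by apply: ler_wpM2l; [exact: ltW | exact: ler_norm].
move: Hs1; rewrite ltr_distlC => /andP [h1 h2].
have : 0 <= s * `|b| by apply: mulr_ge0; [exact: ltW | exact: normr_ge0].
rewrite /e in h1 se; rewrite mulrDr mulr1 in se; lra.
Qed.

Lemma dirlim {f : V -> R} {gradf : V -> V} (x d : V) : is_gradient f gradf ->
  (fun s : R => s^-1 * (f (s *: d + x) - f x)) @ 0^' --> inner (gradf x) d.
Proof.
move=> /(_ x) [df dE].
have H := @diff_derivable _ _ _ _ _ d df.
have E : derive f x d = inner (gradf x) d by rewrite deriveE // dE.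
rewrite -E; exact: H.
Qed.

Lemma grad_ineq (f : V -> R) (gradf : V -> V) (mu : R) :
  strongly_convex mu f -> is_gradient f gradf -> forall x y : V,
  inner (gradf y) (x - y) <= f x - f y - mu / 2 * inner (x - y) (x - y).
Proof.
move=> sc gr x y.
set N := inner (x - y) (x - y).
apply: (@lim_le _ _ _ (mu / 2 * N) (dirlim y (x - y) gr)).
move=> s /andP [s0 s1].
have := sc x y s; rewrite (ltW s0) (ltW s1) => /(_ isT).
have -> : s *: x + (1 - s) *: y = s *: (x - y) + y.
  by apply/matrixP => i j; rewrite !mxE; ring.
rewrite norm2_sq -/N => h.
rewrite mulrC ler_pdivrMr //.
have -> : (f x - f y - mu / 2 * N + s * (mu / 2 * N)) * s =
   s * f x + (1 - s) * f y - mu / 2 * s * (1 - s) * N - f y by ring.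
lra.
Qed.

Lemma strong_mono (f : V -> R) (gradf : V -> V) (mu : R) :
  strongly_convex mu f -> is_gradient f gradf -> forall x y : V,
  mu * inner (x - y) (x - y) <= inner (gradf x - gradf y) (x - y).
Proof.
move=> sc gr x y.
have h1 := grad_ineq _ _ _ sc gr x y.
have h2 := grad_ineq _ _ _ sc gr y x.
have E : y - x = - (x - y) by rewrite opprB.
rewrite E !innerNl !innerNr opprK in h2.
rewrite [inner (gradf x - _) _]innerBl; lra.
Qed.

Lemma opt1 (f : V -> R) (gradf : V -> V) (g : V -> \bar R) (xi : V) (t : R)
  (xs y : V) (gs gy : R) :
  is_gradient f gradf -> convex_efun g -> 0 < t ->
  is_minimizer (fun y => ((t * f y - (1 - t) * inner xi y)%:E + g y)%E) xs ->
  g xs = gs%:E -> g y = gy%:E ->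
  0 <= t * inner (gradf xs) (y - xs) - (1 - t) * inner xi (y - xs) + gy - gs.
Proof.
move=> gr cg t0 mn Exs Ey.
set c := (1 - t) * inner xi (y - xs) - gy + gs.
suff : c / t <= inner (gradf xs) (y - xs).
  rewrite ler_pdivrMr // => h; rewrite /c in h; lra.
rewrite -lerN2.
apply: (@lim_le (fun s => - (s^-1 * (f (s *: (y - xs) + xs) - f xs))) _ _ 0
   (cvgN (dirlim xs (y - xs) gr))).
move=> s /andP[s0 s1]; rewrite mulr0 addr0 lerN2.
have := mn (s *: y + (1 - s) *: xs).
have := cg y xs s; rewrite (ltW s0) (ltW s1) => /(_ isT).
rewrite Ey Exs -!EFinM -EFinD => hg.
move=> /le_trans /(_ (leeD2l _ hg)).
rewrite -!EFinD lee_fin.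
have -> : s *: y + (1 - s) *: xs = s *: (y - xs) + xs.
  by apply/matrixP => i j; rewrite !mxE; ring.
rewrite innerDr innerZr => h.
rewrite ler_pdivrMr // -mulrA ler_pdivlMl // /c; lra.
Qed.

Lemma quad_expand2 (H : 'M[R]_p) (a b : V) (s : R) : H^T = H ->
  inner (H *m (a + s *: b)) (a + s *: b) =
  inner (H *m a) a + 2 * s * inner (H *m a) b + s * s * inner (H *m b) b.
Proof.
move=> HT; rewrite mulmxDr -scalemxAr !innerDl !innerDr !innerZl !innerZr.
rewrite (inner_sym H b a HT) (innerC b).
by rewrite mulr2n !mulrDl mul1r; lra.
Qed.

Lemma opt2 (g : V -> \bar R) (H : 'M[R]_p) (c : R) (z u y : V) (gu gy : R) :
  convex_efun g -> 0 < c -> H^T = H -> (forall w : V, 0 <= inner (H *m w) w) ->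
  is_prox H (fun v => (c%:E * g v)%E) z u ->
  g u = gu%:E -> g y = gy%:E ->
  0 <= c * (gy - gu) + inner (H *m (u - z)) (y - u).
Proof.
move=> cg c0 HT Hpos mn Eu Ey.
set C := c * (gy - gu) + inner (H *m (u - z)) (y - u).
set Qe := inner (H *m (y - u)) (y - u).
rewrite -lerN2 oppr0.
apply: (@lim_le (fun _ => - C) (- C) 0 (Qe / 2) (cvg_cst _)).
move=> s /andP[s0 s1]; rewrite add0r.
have := mn (s *: y + (1 - s) *: u).
have := cg y u s; rewrite (ltW s0) (ltW s1) => /(_ isT).
rewrite Ey Eu -!EFinM -EFinD => hg.
have hg' := lee_wpmul2l (x := c%:E) ltac:(rewrite lee_fin; exact: ltW) hg.
move=> /le_trans /(_ (leeD2r _ hg')).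
rewrite -!EFinM -!EFinD lee_fin /normH !sqr_sqrtr ?Hpos //.
have -> : s *: y + (1 - s) *: u - z = (u - z) + s *: (y - u).
  by apply/matrixP => i j; rewrite !mxE; ring.
rewrite quad_expand2 // -/Qe => h.
have : 0 <= s * (C + s * (Qe / 2)) by rewrite /C; lra.
rewrite pmulr_rge0 // => h2; lra.
Qed.

Lemma posdef_unit (H : 'M[R]_p) : sym_posdef H -> H \in unitmx.
Proof.
move=> [HT Hp]; rewrite unitmxE unitfE; apply/eqP => /eqP /det0P [v v0 vH].
have Hv : H *m v^T = 0 by rewrite -{1}HT -trmx_mul vH trmx0.
have vT0 : v^T != 0.
  by apply: contra v0 => /eqP h; rewrite -(trmxK v) h trmx0.
by have := Hp _ vT0; rewrite Hv inner0l ltxx.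
Qed.

Lemma quad_expand (H : 'M[R]_p) (a b : V) : H^T = H ->
  inner (H *m (a - b)) (a - b) =
  inner (H *m a) a - 2 * inner (H *m a) b + inner (H *m b) b.
Proof.
move=> HT; rewrite mulmxBr !innerBl !innerBr (inner_sym H b a HT) (innerC b).
by rewrite mulr2n mulrDl mul1r; lra.
Qed.

Lemma fin1 (e : \bar R) (a b : R) : e != -oo%E -> (a%:E + e <= b%:E)%E ->
  e = (fine e)%:E.
Proof. by case: e => // _; rewrite addey // leye_eq. Qed.

Lemma fin2 (e : \bar R) (c a b : R) : 0 < c -> e != -oo%E ->
  (c%:E * e + a%:E <= b%:E)%E -> e = (fine e)%:E.
Proof.
by move=> c0; case: e => // _; rewrite gt0_muley ?lte_fin // addye // leye_eq.
Qed.

Lemma final_step (m K ee dd : R) : 0 < m -> 0 <= ee -> 0 <= dd ->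
  m * m * ee <= K * dd ->
  Num.sqrt ee <= m^-1 * Num.sqrt K * Num.sqrt dd.
Proof.
move=> m0 ee0 dd0 h.
have rhs0 : 0 <= m^-1 * Num.sqrt K * Num.sqrt dd.
  by rewrite !mulr_ge0 ?invr_ge0 ?sqrtr_ge0 // ltW.
case: (leP K 0) => hK.
  have Kd : K * dd <= 0 by rewrite mulr_le0_ge0.
  have mm : 0 < m * m by rewrite mulr_gt0.
  have : m * m * ee <= 0 by apply: le_trans h Kd.
  rewrite pmulr_rle0 //.
  by rewrite -sqrtr_eq0 => /eqP ->.
rewrite -mulrA -sqrtrM ?(ltW hK) // ler_pdivlMl //.
have m0' : 0 <= m by exact: ltW.
rewrite -[m in m * _]ger0_norm // -sqrtr_sqr -sqrtrM ?sqr_ge0 //.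
by apply: ler_wsqrtr; rewrite expr2.
Qed.

Lemma Hz_lemma (A : 'M[R]_p) (u xs xk w : V) : A \in unitmx ->
  A *m (u - (xk - invmx A *m w)) = A *m (u - xs) - A *m (xk - xs) + w.
Proof.
move=> hu; rewrite !mulmxBr mulmxA mulmxV // mul1mx.
by apply/matrixP => i j; rewrite !mxE; ring.
Qed.
End Helpers.

Theorem lemmaB3 (R : realType) (p : nat)
  (f : 'cV[R]_p -> R) (gradf : 'cV[R]_p -> 'cV[R]_p) (g : 'cV[R]_p -> \bar R)
  (mu Lf : R) (x0 xi0 : 'cV[R]_p) (xstar : R -> 'cV[R]_p)
  (m L : R) (tau : nat -> R) (x : nat -> 'cV[R]_p) (H : nat -> 'M[R]_p) :
  0 < mu -> strongly_convex mu f ->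
  is_gradient f gradf -> lipschitz_gradient Lf gradf ->
  proper_fun g -> closed_fun g -> convex_efun g ->
  (g x0 < +oo)%E -> subgradient g x0 xi0 ->
  (forall t : R, 0 < t <= 1 ->
     is_minimizer (fun y => ((t * f y - (1 - t) * inner xi0 y)%:E + g y)%E) (xstar t)) ->
  0 < m -> m <= L ->
  m^-1 * Num.sqrt ((L - 2 * mu) * m + Lf ^+ 2) < 1 ->
  (forall k, 0 < tau k <= 1) ->
  (forall k, sym_posdef (H k) /\ loewner_bounds m L (H k)) ->
  (forall k, is_prox (H k) (fun u => ((tau k.+1)^-1%:E * g u)%E)
       (x k - invmx (H k) *m (gradf (x k) - ((tau k.+1)^-1 - 1) *: xi0))
       (x k.+1)) ->
  forall k,
    norm2 (x k.+1 - xstar (tau k.+1)) <=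
      m^-1 * Num.sqrt ((L - 2 * mu) * m + Lf ^+ 2) * norm2 (x k - xstar (tau k.+1)).
Proof.
move=> mu0 sc gr lip [gnoo _] _ cg gx0 _ mnx m0 mL _ taup Hp prox k.
have mxs := mnx _ (taup k.+1).
have pr := prox k.
have [[HT Hpd] Hlb] := Hp k.
have [t0 t1] := andP (taup k.+1).
move: mxs pr t0 t1.
set t := tau k.+1; set xs := xstar t; set u := x k.+1; set xk := x k.
set Hk := H k; set w := gradf xk - (t^-1 - 1) *: xi0.
set z := xk - invmx Hk *m w.
move=> mxs pr t0 t1.
have Qpos : forall v, 0 <= inner (Hk *m v) v.
  move=> v; apply: le_trans (proj1 (Hlb v)).
  by rewrite mulr_ge0 ?inner_ge0 // ltW.
have E0 : g x0 = (fine (g x0))%:E.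
  by move: gx0 (gnoo x0); case: (g x0).
have gxsE : g xs = (fine (g xs))%:E.
  apply: (@fin1 _ _ _ (t * f x0 - (1 - t) * inner xi0 x0 + fine (g x0))) => //.
  by have := mxs x0; rewrite E0 -EFinD; apply.
have guE : g u = (fine (g u))%:E.
  apply: (@fin2 _ _ t^-1 _ (t^-1 * fine (g x0) + 2^-1 * normH Hk (x0 - z) ^+ 2)) => //.
    by rewrite invr_gt0.
  by have := pr x0; rewrite E0 -EFinM -EFinD; apply.
set gs := fine (g xs); set gu := fine (g u).
have E1 := @opt1 _ _ _ _ _ _ _ _ _ _ _ gr cg t0 mxs gxsE guE.
have ti0 : 0 < t^-1 by rewrite invr_gt0.
have E2 := @opt2 _ _ _ _ _ _ _ _ _ _ cg ti0 HT Qpos pr guE gxsE.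
have hu := @posdef_unit _ _ _ (conj HT Hpd).
rewrite -/Hk in E2 HT hu.
set e := u - xs; set d := xk - xs.
have Hz : Hk *m (u - z) = Hk *m e - Hk *m d + w.
  exact: Hz_lemma.
have Ee : xs - u = - e by rewrite opprB.
rewrite Hz Ee innerNr !innerDl !innerNl innerZl in E2.
have tt : t^-1 * t = 1 by rewrite mulVf // gt_eqF.
have E1' := mulr_ge0 (ltW ti0) E1.
rewrite -/e -/gs -/gu in E1 E1'.
have eq1 : t^-1 * (t * inner (gradf xs) e - (1 - t) * inner xi0 e + gu - gs) =
   (t^-1 * t) * inner (gradf xs) e - (t^-1 - t^-1 * t) * inner xi0 e + t^-1 * (gu - gs) by ring.
rewrite eq1 tt mul1r in E1'.
rewrite -/gs -/gu in E2.
have key : inner (Hk *m e) e <= inner (Hk *m d) e - inner (gradf xk) e + inner (gradf xs) e.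
  lra.
set G := gradf xk - gradf xs.
set v := invmx Hk *m G.
have HvG : Hk *m v = G by rewrite /v mulmxA mulmxV // mul1mx.
have sm := @strong_mono _ _ _ _ _ sc gr xk xs; rewrite -/d -/G in sm.
have lp := lip xk xs; rewrite -/G -/d in lp.
have eG : inner G e = inner (gradf xk) e - inner (gradf xs) e by rewrite /G innerBl.
clearbody v G e d.
have A1 := Qpos (d - v - e).
rewrite quad_expand // quad_expand // mulmxBr innerBl HvG in A1.
rewrite (inner_sym _ _ Hk d v HT) HvG (innerC _ _ d G) in A1.
have [Ld1 Ld2] := Hlb d.
have [Le1 Le2] := Hlb e.
have [Lv1 Lv2] := Hlb v; rewrite HvG in Lv1.
have Eu := inner_ge0 _ _ (G - m *: v).
rewrite !innerBl !innerBr !innerZl !innerZr (innerC _ _ v G) in Eu.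
have lp2 : inner G G <= Lf ^+ 2 * inner d d.
  have nG0 : 0 <= norm2 G by rewrite /norm2 sqrtr_ge0.
  rewrite -!norm2_sq; nra.
rewrite -/Hk in Ld1 Ld2 Le1 Le2.
have S1 : inner (Hk *m e) e <= (L - 2 * mu) * inner d d + inner G v by lra.
have S2' : m * (m * inner v v) <= m * inner G v by rewrite ler_wpM2l // ltW.
have S2 : m * inner G v <= Lf ^+ 2 * inner d d by lra.
have P1 : m * (m * inner e e) <= m * inner (Hk *m e) e by rewrite ler_wpM2l // ltW.
have P2 : m * inner (Hk *m e) e <= m * ((L - 2 * mu) * inner d d + inner G v).
  by rewrite ler_wpM2l // ltW.
rewrite /norm2; apply: final_step => //; try exact: inner_ge0.
rewrite mulrDl -mulrA; lra.
Qed.
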